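(* Let $n\ge5$ be odd and $M$ an $n\times n$ HW-matrix. There is no spin$^c$ set $S$ for $M$ with $|S|=n-2$.
   Context: $\mathcal S=\{0,1,2,3\}$ is the Klein four-group ($\mathbb Z_2$-vector space) with $x+x=0$, $1+2=3$, $1+3=2$, $2+3=1$. $\mathcal P_n$ is the power set of $\{1,\dots,n\}$ (addition = symmetric difference, product = intersection); $|U|_2=|U|\bmod 2$; $J_M(U)=\{j:\sum_{i\in U}M_{ij}=1\}$. $M$ is an HW-matrix if it has $1$ on the diagonal and $2$ or $3$ off the diagonal, all column sums are $0$, and $J_M(U)\ne\emptyset$ for all $U\ne\emptyset,\{1,\dots,n\}$. $S\in\mathcal P_n$ is a spin$^c$ set for $M$ if $|(J_M(U)+U)\cap S|_2=\binom{|U|}2\bmod 2$ for all $U\in\mathcal P_n$. *)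

(* Defs.v *)
From mathcomp Require Import all_boot all_order all_algebra.
Set Implicit Arguments. Unset Strict Implicit. Unset Printing Implicit Defensive.
Import GRing.Theory.
Local Open Scope ring_scope.

(* The Klein four-group S = {0,1,2,3}, realized as F_2 x F_2 with
   0 = (0,0), 1 = (1,0), 2 = (0,1), 3 = (1,1); so x+x = 0, 1+2 = 3, 1+3 = 2, 2+3 = 1. *)
Definition K4 : Type := ('F_2 * 'F_2)%type.
Definition k0 : K4 := (0, 0).
Definition k1 : K4 := (1, 0).
Definition k2 : K4 := (0, 1).
Definition k3 : K4 := (1, 1).

Definition symdiff (n : nat) (A B : {set 'I_n}) : {set 'I_n} :=
  (A :\: B) :|: (B :\: A).

Definition JM (n : nat) (M : 'M[K4]_n) (U : {set 'I_n}) : {set 'I_n} :=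
  [set j | \sum_(i in U) M i j == k1].

Definition is_HW (n : nat) (M : 'M[K4]_n) : Prop :=
  [/\ (forall i, M i i = k1),
      (forall i j, i != j -> M i j = k2 \/ M i j = k3),
      (forall j, \sum_i M i j = k0) &
      (forall U : {set 'I_n}, U != set0 -> U != setT -> JM M U != set0)].

Definition spinc_set (n : nat) (M : 'M[K4]_n) (S : {set 'I_n}) : Prop :=
  forall U : {set 'I_n},
    odd #|symdiff (JM M U) U :&: S| = odd 'C(#|U|, 2).

(* Main.v *)
Require Import Defs.
From mathcomp Require Import all_boot all_order all_algebra.
Set Implicit Arguments. Unset Strict Implicit.
Import GRing.Theory.
Section Tour.
Variables (T : finType) (r : rel T).
Definition outs (B : {set T}) y := [set z in B | (z != y) && r y z].
Definition notri (B : {set T}) := forall x y z, x \in B -> y \in B -> z \in B ->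
  x != y -> y != z -> z != x -> ~~ [&& r x y, r y z & r z x].
Definition istour (B : {set T}) := forall x y, x \in B -> y \in B -> x != y -> r x y = ~~ r y x.

Lemma sink_ex (B : {set T}) : notri B -> istour B ->
  forall k y, y \in B -> #|outs B y| <= k -> exists2 s, s \in B & outs B s = set0.
Proof.
move=> Hno Ht; elim=> [|k IH] y yB.
  by rewrite leqn0 cards_eq0 => /eqP e; exists y.
case: (set_0Vmem (outs B y)) => [e|[z zo]] Hk; first by exists y.
move: (zo); rewrite inE => /and3P [zB zy ryz].
apply: (IH z zB).
have sub : outs B z \subset outs B y :\ z.
  apply/subsetP => w; rewrite !inE => /and3P [wB wz rzw].
  rewrite wz wB /=.
  have wy : w != y.
    apply/negP => /eqP ewy; move: rzw; rewrite ewy (Ht z y zB yB) ?ryz //.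
  rewrite wy /=.
  case nryw: (r y w) => //.
  have rwy : r w y by rewrite (Ht w y wB yB wy) nryw.
  have := Hno y z w yB zB wB; rewrite ryz rzw rwy; apply => //; by rewrite eq_sym.
have e := cardsD1 z (outs B y); rewrite zo add1n in e.
have h := subset_leq_card sub.
by rewrite -ltnS; apply: leq_trans Hk; rewrite e ltnS.
Qed.

Lemma tri_ex (A : {set T}) : istour A -> (1 < #|A|)%N ->
  (forall x y, x \in A -> y \in A -> odd #|outs A x| = odd #|outs A y|) ->
  exists x y z, [/\ x \in A, y \in A, z \in A, [/\ x != y, y != z & z != x]
                  & [&& r x y, r y z & r z x]].
Proof.
move=> Ht A2 Hpar.
case: (boolP [exists x, exists y, exists z, [&& x \in A, y \in A, z \in A,
   [&& x != y, y != z & z != x] & [&& r x y, r y z & r z x]]]).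
  move=> /existsP [x /existsP [y /existsP [z /and5P [xA yA zA /and3P [? ? ?] h]]]].
  by exists x, y, z.
move=> Hno0.
have Hno : forall B : {set T}, B \subset A -> notri B.
  move=> B sB x y z xB yB zB xy yz zx; apply/negP => h; move/negP: Hno0; apply.
  apply/existsP; exists x; apply/existsP; exists y; apply/existsP; exists z.
  by rewrite !(subsetP sB) //= xy yz zx h.
have Htsub : forall B : {set T}, B \subset A -> istour B.
  by move=> B sB x y xB yB; apply: Ht; apply: (subsetP sB).
have [a aA] : exists a, a \in A.
  by apply/set0Pn; rewrite -card_gt0; apply: ltnW.
have [s sA ss] := sink_ex (Hno A (subxx _)) Ht aA (leqnn _).
set B := A :\ s.
have sBA : B \subset A by apply: subsetDl.
have [b bB] : exists b, b \in B.
  apply/set0Pn; rewrite -card_gt0.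
  by have := cardsD1 s A; rewrite sA add1n => e; rewrite -ltnS -e.
have [t tB ts] := sink_ex (Hno B sBA) (Htsub B sBA) bB (leqnn _).
move: (tB); rewrite !inE => /andP [tns tA].
have : outs A t = [set s].
  apply/setP => z; rewrite !inE.
  case: (eqVneq z s) => [->|zs].
    rewrite sA eq_sym tns /= (Ht t s tA sA tns).
    apply/negP => rst.
    have : t \in outs A s by rewrite inE tA tns rst.
    by rewrite ss inE.
  apply/negP => /and3P [zA zt rtz].
  have : z \in outs B t by rewrite !inE zs zA zt rtz.
  by rewrite ts inE.
move=> et; move: (Hpar s t sA tA); by rewrite ss et cards0 cards1.
Qed.
End Tour.

Local Open Scope ring_scope.

Lemma F2P (x : 'F_2) : x = 0 \/ x = 1.
Proof. case: x => m Hm; case: m Hm => [|[|m]] Hm; [left|right|]; try by apply/val_inj.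
by []. Qed.

Lemma natF2 m : (m%:R : 'F_2) = (odd m)%:R.
Proof.
elim: m => [//|m IH]; rewrite -[m.+1]addn1 natrD IH oddD /=.
by case: (odd m); apply/eqP.
Qed.

Lemma boolF2 (b1 b2 : bool) : (b1%:R : 'F_2) = b2%:R -> b1 = b2.
Proof. by case: b1; case: b2 => // /eqP. Qed.

Lemma cardF2 (T : finType) (X S : {set T}) :
  (#|X :&: S|%:R : 'F_2) = \sum_(j in S) (j \in X)%:R.
Proof.
rewrite -sum1_card natr_sum big_mkcond [RHS]big_mkcond /=.
apply: eq_bigr => j _; rewrite inE.
by case: (j \in X); case: (j \in S).
Qed.

Lemma sum_delta (T : finType) (S : {set T}) i (f : T -> 'F_2) : i \in S ->
  \sum_(j in S) (j == i)%:R * f j = f i.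
Proof.
move=> iS; rewrite (bigD1 i) //= eqxx mul1r big1 ?addr0 //.
by move=> j /andP [_ /negbTE ->]; rewrite mul0r.
Qed.

Section Main.
Variables (n : nat) (M : 'M[K4]_n).
Hypothesis HW : is_HW M.
Definition aa i j : 'F_2 := (M i j).1.

Lemma HWentry i j : M i j = (aa i j, (i != j)%:R).
Proof.
case: HW => Hd Ho _ _; rewrite /aa.
case: (eqVneq i j) => [->|ij]; first by rewrite Hd.
by case: (Ho i j ij) => ->.
Qed.

Lemma aii i : aa i i = 1.
Proof. by case: HW => Hd _ _ _; rewrite /aa Hd. Qed.

Variable S : {set 'I_n}.
Hypothesis Hspin : spinc_set M S.
Definition ww i := \sum_(j in S) aa i j.

Lemma pair_rel i k : i \in S -> k \in S -> i != k ->
  aa i k + aa k i + ww i + ww k = 1.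
Proof.
move=> iS kS ik.
have := Hspin (i |: [set k]).
have -> : #|i |: [set k]| = 2%N by rewrite cardsU1 cards1 inE ik.
move=> /= h.
have : (#|symdiff (JM M (i |: [set k])) (i |: [set k]) :&: S|%:R : 'F_2) = 1.
  by rewrite natF2 h.
rewrite cardF2.
have pt : forall j, ((j \in symdiff (JM M (i |: [set k])) (i |: [set k])) %:R : 'F_2)
   = (aa i j + aa k j) + (j == i)%:R * (aa i j + aa k j + 1)
      + (j == k)%:R * (aa i j + aa k j + 1).
  have ki : k != i by rewrite eq_sym.
  move=> j; rewrite /symdiff /JM !inE big_setU1 ?inE // big_set1 !HWentry.
  case: (eqVneq j i) => [->|ji].
    rewrite ?eqxx ?(negbTE ik) ?(negbTE ki) aii.
    by case: (F2P (aa k i)) => ->; apply/eqP.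
  case: (eqVneq j k) => [->|jk].
    rewrite ?eqxx ?(negbTE ik) ?(negbTE ki) aii.
    by case: (F2P (aa i k)) => ->; apply/eqP.
  have ij : i != j by rewrite eq_sym.
  have kj : k != j by rewrite eq_sym.
  rewrite ?(negbTE ji) ?(negbTE jk) ?(negbTE ij) ?(negbTE kj) /=.
  by case: (F2P (aa i j)) => ->; case: (F2P (aa k j)) => ->; apply/eqP.
rewrite (eq_bigr _ (fun j _ => pt j)) !big_split /= !sum_delta // -/(ww i).
rewrite -/(ww k) !aii.
move: (ww i) (ww k) (aa i k) (aa k i) => x y u v.
by case: (F2P x) => ->; case: (F2P y) => ->; case: (F2P u) => ->; case: (F2P v) => ->;
  move/eqP => //= _; apply/eqP.
Qed.

Definition cc i j := aa i j + ww j.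
Definition rr := fun i j => cc i j == 1.

Lemma tourS : istour rr S.
Proof.
move=> x y xS yS xy; have := pair_rel xS yS xy; rewrite /rr /cc.
move: (ww x) (ww y) (aa x y) (aa y x) => p q u v.
by case: (F2P p) => ->; case: (F2P q) => ->; case: (F2P u) => ->; case: (F2P v) => ->;
  move/eqP.
Qed.

Lemma parS x : x \in S -> (#|outs rr S x|%:R : 'F_2) = 1 + \sum_(j in S) ww j.
Proof.
move=> xS.
have -> : outs rr S x = [set z | (z != x) && rr x z] :&: S.
  by apply/setP => z; rewrite !inE andbC.
rewrite cardF2.
have pt : forall j, ((j \in [set z | (z != x) && rr x z]) %:R : 'F_2)
   = cc x j + (j == x)%:R * cc x j.
  move=> j; rewrite inE /rr.
  case: (eqVneq j x) => [->|jx] /=.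
    by case: (F2P (cc x x)) => ->; apply/eqP.
  by case: (F2P (cc x j)) => ->; apply/eqP.
rewrite (eq_bigr _ (fun j _ => pt j)) big_split /= sum_delta //.
rewrite /cc big_split /= -/(ww x) aii.
move: (ww x) (\sum_(j in S) ww j) => p q.
by case: (F2P p) => ->; case: (F2P q) => ->; apply/eqP.
Qed.

End Main.

From mathcomp Require Import zify.

Theorem mainTheorem17 (n : nat) (M : 'M[K4]_n) :
  (5 <= n)%N -> odd n -> is_HW M ->
  ~ (exists S : {set 'I_n}, spinc_set M S /\ #|S| = (n - 2)%N).
Proof.
move=> n5 _ HW [S [Hsp cS]].
have A2 : (1 < #|S|)%N by rewrite cS; lia.
have Ht := tourS HW Hsp.
have Hpar : forall x y, x \in S -> y \in S ->
    odd #|outs (rr M S) S x| = odd #|outs (rr M S) S y|.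
  by move=> x y xS yS; apply: boolF2; rewrite -!natF2 !(parS HW).
have [x [y [z [xS yS zS [xy yz zx] /and3P [rxy ryz rzx]]]]] := tri_ex Ht A2 Hpar.
have ryx : rr M S y x = false by rewrite (Ht y x yS xS); [rewrite rxy | rewrite eq_sym].
have rzy : rr M S z y = false by rewrite (Ht z y zS yS); [rewrite ryz | rewrite eq_sym].
have rxz : rr M S x z = false by rewrite (Ht x z xS zS); [rewrite rzx | rewrite eq_sym].
move: rxy ryz rzx ryx rzy rxz; rewrite /rr /cc => rxy ryz rzx ryx rzy rxz.
case: (HW) => _ _ _ Hne.
set U := x |: (y |: [set z]).
have xnU : x \notin y |: [set z] by rewrite !inE negb_or xy eq_sym zx.
have ynU : y \notin [set z] by rewrite !inE.
have cU : #|U| = 3%N by rewrite cardsU1 xnU cardsU1 ynU cards1.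
have : JM M U != set0.
  apply: Hne.
    by apply/set0Pn; exists x; rewrite !inE eqxx.
  apply/negP => /eqP e; move: cU; rewrite e cardsT card_ord => e3.
  by rewrite e3 in n5.
suff -> : JM M U = set0 by rewrite eqxx.
apply/setP => j; rewrite /JM !inE big_setU1 // big_setU1 // big_set1 !(HWentry HW).
case: (eqVneq j x) => [->|jx].
  have yx : y != x by rewrite eq_sym.
  rewrite ?eqxx ?(negbTE yx) ?(negbTE zx) (aii HW).
  move: ryx rzx; move: (aa M y x) (aa M z x) (ww M S x) => p q t.
  by case: (F2P p) => ->; case: (F2P q) => ->; case: (F2P t) => ->.
case: (eqVneq j y) => [->|jy].
  have zy : z != y by rewrite eq_sym.
  rewrite ?eqxx ?(negbTE zy) ?(negbTE xy) (aii HW).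
  move: rzy rxy; move: (aa M x y) (aa M z y) (ww M S y) => p q t.
  by case: (F2P p) => ->; case: (F2P q) => ->; case: (F2P t) => ->.
case: (eqVneq j z) => [->|jz].
  have xz : x != z by rewrite eq_sym.
  rewrite ?eqxx ?(negbTE xz) ?(negbTE yz) (aii HW).
  move: rxz ryz; move: (aa M x z) (aa M y z) (ww M S z) => p q t.
  by case: (F2P p) => ->; case: (F2P q) => ->; case: (F2P t) => ->.
have xj : x != j by rewrite eq_sym.
have yj : y != j by rewrite eq_sym.
have zj : z != j by rewrite eq_sym.
rewrite ?xj ?yj ?zj.
move: (aa M x j) (aa M y j) (aa M z j) => p q t.
by case: (F2P p) => ->; case: (F2P q) => ->; case: (F2P t) => ->.
Qed.
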